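(* Let $m$ be a positive integer, $M=\{1,\ldots,m\}$, and let $Y\subseteq\mathbb{R}^m$. If the free disposal hull $Y+\mathbb{R}^m_{\geq 0}$ of $Y$ is convex, then the following are equivalent: $(\alpha)$ $\mathrm{WM}\,Y=\mathrm{M}\,Y$; $(\beta)$ $\displaystyle\bigcup_{\emptyset\neq I\subseteq M}\mathrm{M}_I Y\subseteq \mathrm{M}\,Y$.
   Context: Let $M=\{1,\ldots,m\}$. For a nonempty $I\subseteq M$ and $y=(y_1,\ldots,y_m),y'=(y'_1,\ldots,y'_m)\in\mathbb{R}^m$: $y\leq_I y'$ means $y_i\leq y'_i$ for all $i\in I$; $y<_I y'$ means $y_i<y'_i$ for all $i\in I$; $y\lneq_I y'$ means $y_i\leq y'_i$ for all $i\in I$ and $y_j<y'_j$ for some $j\in I$. For $Y\subseteq\mathbb{R}^m$, $\mathrm{M}_I Y$ (resp. $\mathrm{WM}_I Y$) is the set of all $y'\in Y$ for which there is no $y\in Y$ with $y\lneq_I y'$ (resp. $y<_I y'$). Set $\mathrm{M}\,Y=\mathrm{M}_M Y$ (efficient set) and $\mathrm{WM}\,Y=\mathrm{WM}_M Y$ (weakly efficient set). $\mathbb{R}^m_{\geq0}=\{(y_1,\ldots,y_m)\in\mathbb{R}^m: y_i\ge 0\ \forall i\}$, and the free disposal hull of $Z\subseteq\mathbb{R}^m$ is $Z+\mathbb{R}^m_{\geq0}$. *)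

(* Defs.v *)
From Stdlib Require Import Reals.
Open Scope R_scope.

(* Index set M = {1,...,m} represented as {i : nat | (i < m)%nat} (0-based). *)
Definition idx (m : nat) : Type := { i : nat | (i < m)%nat }.

Definition vec (m : nat) : Type := idx m -> R.

Definition vset (m : nat) : Type := vec m -> Prop.
Definition iset (m : nat) : Type := idx m -> Prop.

Definition nonempty_iset {m : nat} (I : iset m) : Prop := exists i, I i.

Definition leI {m : nat} (I : iset m) (y y' : vec m) : Prop :=
  forall i, I i -> y i <= y' i.
Definition ltI {m : nat} (I : iset m) (y y' : vec m) : Prop :=
  forall i, I i -> y i < y' i.
Definition lneqI {m : nat} (I : iset m) (y y' : vec m) : Prop :=
  leI I y y' /\ exists j, I j /\ y j < y' j.

Definition MI {m : nat} (I : iset m) (Y : vset m) : vset m :=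
  fun y' => Y y' /\ ~ (exists y, Y y /\ lneqI I y y').
Definition WMI {m : nat} (I : iset m) (Y : vset m) : vset m :=
  fun y' => Y y' /\ ~ (exists y, Y y /\ ltI I y y').

Definition fullI (m : nat) : iset m := fun _ => True.

Definition Meff {m : nat} (Y : vset m) : vset m := MI (fullI m) Y.
Definition WMeff {m : nat} (Y : vset m) : vset m := WMI (fullI m) Y.

Definition fdh {m : nat} (Y : vset m) : vset m :=
  fun z => exists y d, Y y /\ (forall i, 0 <= d i) /\ (forall i, z i = y i + d i).

Definition convex {m : nat} (S : vset m) : Prop :=
  forall x y (t : R), S x -> S y -> 0 <= t <= 1 ->
    S (fun i => t * x i + (1 - t) * y i).

Definition set_eq {m : nat} (A B : vset m) : Prop := forall y, A y <-> B y.
Definition set_sub {m : nat} (A B : vset m) : Prop := forall y, A y -> B y.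

(* Main.v *)
Require Import Defs.
From Stdlib Require Import Reals Lra Lia List Classical ProofIrrelevance.
Open Scope R_scope.

Lemma idx_eq {m : nat} (i j : idx m) : proj1_sig i = proj1_sig j -> i = j.
Proof.
  destruct i as [i Hi], j as [j Hj]; simpl; intros ->.
  f_equal; apply proof_irrelevance.
Qed.

Lemma step_real (a b c : R) : a < b ->
  exists s, 0 < s <= 1/2 /\ a + s * (c - a) < b.
Proof.
  intros Hab.
  set (D := Rabs (c - a) + (b - a)).
  assert (HD : 0 < D) by (unfold D; pose proof (Rabs_pos (c - a)); lra).
  exists ((b - a) / (2 * D)).
  assert (Hs : 0 < (b - a) / (2 * D)) by (apply Rdiv_lt_0_compat; lra).
  assert (HsD : (b - a) / (2 * D) * D = (b - a) / 2) by (field; lra).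
  split; [split; [lra|] |].
  - apply (Rmult_le_reg_r D); [lra|]. rewrite HsD.
    unfold D; pose proof (Rabs_pos (c - a)); nra.
  - assert (H1 : c - a <= Rabs (c - a)) by apply RRle_abs.
    assert (H2 : Rabs (c - a) < D) by (unfold D; lra).
    assert ((b - a) / (2 * D) * (c - a) <= (b - a) / (2 * D) * Rabs (c - a))
      by (apply Rmult_le_compat_l; lra).
    assert ((b - a) / (2 * D) * Rabs (c - a) < (b - a) / (2 * D) * D)
      by (apply Rmult_lt_compat_l; lra).
    lra.
Qed.

Lemma key (m : nat) (Y : vset m) (y' : vec m) :
  convex (fdh Y) ->
  (forall I : iset m, nonempty_iset I -> exists y, Y y /\ lneqI I y y') ->
  forall n (I : iset m) (l : list nat), (length l <= n)%nat -> nonempty_iset I ->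
    (forall i, I i -> In (proj1_sig i) l) -> exists w, fdh Y w /\ ltI I w y'.
Proof.
  intros Hc Hh n. induction n as [|n IH]; intros I l Hl HI Hin.
  - destruct l; [|simpl in Hl; lia]. destruct HI as [i Hi]. destruct (Hin i Hi).
  - destruct (Hh I HI) as [yI [HyI [Hle [j [Hj Hlt]]]]].
    assert (HyIf : fdh Y yI).
    { exists yI, (fun _ => 0). repeat split; auto; intros; lra. }
    destruct (classic (exists i, I i /\ proj1_sig i <> proj1_sig j)) as [HJ|HJ].
    + set (J := fun i : idx m => I i /\ proj1_sig i <> proj1_sig j).
      set (l' := remove Nat.eq_dec (proj1_sig j) l).
      assert (Hlen : (length l' < length l)%nat)
        by (apply remove_length_lt; auto).
      destruct (IH J l') as [w [Hw HwJ]].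
      * lia.
      * exact HJ.
      * intros i [Hi Hne]. apply in_in_remove; auto.
      * destruct (step_real (yI j) (y' j) (w j) Hlt) as [s [Hs Hs2]].
        exists (fun i => (1 - s) * yI i + (1 - (1 - s)) * w i).
        split.
        -- apply Hc; auto; lra.
        -- intros i Hi.
           destruct (Nat.eq_dec (proj1_sig i) (proj1_sig j)) as [E|E].
           ++ apply idx_eq in E; subst i. lra.
           ++ assert (HwI : w i < y' i) by (apply HwJ; split; auto).
              specialize (Hle i Hi). nra.
    + exists yI. split; auto.
      intros i Hi.
      destruct (Nat.eq_dec (proj1_sig i) (proj1_sig j)) as [E|E].
      * apply idx_eq in E; subst i. exact Hlt.
      * exfalso; apply HJ; eauto.
Qed.

Theorem theorem2p1 (m : nat) (hm : (0 < m)%nat) (Y : vset m) :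
  convex (fdh Y) ->
  (set_eq (WMeff Y) (Meff Y) <->
   (forall I : iset m, nonempty_iset I -> set_sub (MI I Y) (Meff Y))).
Proof.
  intros Hc. split.
  - intros Heq I [i0 Hi0] y' [HY Hn]. apply Heq. split; auto.
    intros [y [Hy Hlt]]. apply Hn. exists y. split; auto.
    split.
    + intros i _. left. apply Hlt. exact Logic.I.
    + exists i0. split; auto. apply Hlt. exact Logic.I.
  - intros Hb y'. split.
    + intros [HY Hn].
      destruct (classic (exists I, nonempty_iset I /\ MI I Y y')) as [[I [HI HM]]|HN].
      * exact (Hb I HI y' HM).
      * exfalso.
        assert (Hh : forall I : iset m, nonempty_iset I -> exists y, Y y /\ lneqI I y y').
        { intros I HI. apply NNPP. intros Hno. apply HN. exists I. split; auto.
          split; auto. }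
        destruct (key m Y y' Hc Hh m (fullI m) (seq 0 m)) as [w [[y [d [Hy [Hd Hwd]]]] Hw]].
        -- rewrite length_seq. lia.
        -- exists (exist _ 0%nat hm). exact I.
        -- intros [i Hi] _. simpl. apply in_seq. lia.
        -- apply Hn. exists y. split; auto. intros i _.
           specialize (Hw i I). specialize (Hd i). rewrite Hwd in Hw. lra.
    + intros [HY Hn]. split; auto. intros [y [Hy Hlt]]. apply Hn. exists y.
      split; auto. split.
      * intros i _. left. apply Hlt. exact Logic.I.
      * exists (exist _ 0%nat hm). split; [exact I|]. apply Hlt. exact Logic.I.
Qed.
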